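(* Let $X$ be a compact metric space with metric $d$, let $0<L<1$, and let $f\colon X\to X$ be a continuous map with the $L$-Lipschitz shadowing property. Then the set $\mathcal{C}(f)$ of chain components of $f$ is finite, and for every $C\in\mathcal{C}(f)$, the restriction $f|_C\colon C\to C$ (with the restricted metric) has the $L$-Lipschitz shadowing property.
   Context: For a continuous map $g\colon Y\to Y$ on a metric space $(Y,d)$ and $\delta>0$, a sequence $(x_i)_{i\ge0}$ in $Y$ is a $\delta$-pseudo orbit of $g$ if $d(g(x_i),x_{i+1})\le\delta$ for all $i\ge0$; it is $\epsilon$-shadowed by $y$ if $d(g^i(y),x_i)\le\epsilon$ for all $i\ge0$. $g$ has the $L$-Lipschitz shadowing property if there is $\delta_0>0$ such that for every $0<\delta\le\delta_0$, every $\delta$-pseudo orbit of $g$ is $L\delta$-shadowed by some point of $Y$. A $\delta$-chain of $f$ is a finite sequence $(x_i)_{i=0}^k$, $k\ge1$, with $d(f(x_i),x_{i+1})\le\delta$ for $0\le i\le k-1$. Write $x\to y$ if for every $\delta>0$ there is a $\delta$-chain from $x$ to $y$ (i.e. $x_0=x$, $x_k=y$). $CR(f)=\{x\in X: x\to x\}$. On $CR(f)$ define $x\leftrightarrow y$ iff $x\to y$ and $y\to x$; this is an equivalence relation, and its equivalence classes are the chain components of $f$; $\mathcal{C}(f)$ denotes the set of chain components. Each chain component is a closed $f$-invariant subset. *)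

(* Defs.v *)
From HB Require Import structures.
From mathcomp Require Import all_boot all_order all_algebra.
From mathcomp Require Import all_classical all_reals all_analysis.
Set Implicit Arguments. Unset Strict Implicit. Unset Printing Implicit Defensive.
Import Order.TTheory GRing.Theory Num.Theory.
Local Open Scope classical_set_scope.
Local Open Scope ring_scope.

Section Defs.
Context {R : realType} {X : metricType R}.
Local Notation d := (@mdist R X).

Definition pseudo_orbit (f : X -> X) (delta : R) (x : nat -> X) : Prop :=
  forall i, d (f (x i)) (x i.+1) <= delta.

Definition shadowed_by (f : X -> X) (eps : R) (x : nat -> X) (y : X) : Prop :=
  forall i, d (iter i f y) (x i) <= eps.

(* L-Lipschitz shadowing property of the restriction of f to A (A f-invariant),
   with the restricted metric: pseudo orbits and shadowing points lie in A. *)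
Definition lip_shadowing_on (A : set X) (f : X -> X) (L : R) : Prop :=
  exists2 delta0 : R, 0 < delta0 &
    forall delta : R, 0 < delta -> delta <= delta0 ->
    forall x : nat -> X, (forall i, A (x i)) -> pseudo_orbit f delta x ->
    exists2 y : X, A y & shadowed_by f (L * delta) x y.

Definition lip_shadowing (f : X -> X) (L : R) : Prop :=
  lip_shadowing_on setT f L.

Definition delta_chain (f : X -> X) (delta : R) (a b : X) : Prop :=
  exists (k : nat) (x : nat -> X), [/\ (1 <= k)%N, x 0%N = a, x k = b &
    forall i, (i < k)%N -> d (f (x i)) (x i.+1) <= delta].

Definition chain_rel (f : X -> X) (a b : X) : Prop :=
  forall delta : R, 0 < delta -> delta_chain f delta a b.

Definition chain_recurrent (f : X -> X) : set X := [set x | chain_rel f x x].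

Definition chain_equiv (f : X -> X) (a b : X) : Prop :=
  chain_recurrent f a /\ chain_recurrent f b /\ chain_rel f a b /\ chain_rel f b a.

Definition chain_components (f : X -> X) : set (set X) :=
  [set C | exists2 x, chain_recurrent f x & C = [set y | chain_equiv f x y]].

End Defs.

(* Main.v *)
Require Import Defs.
From HB Require Import structures.
From mathcomp Require Import all_boot all_order all_algebra.
From mathcomp Require Import all_classical all_reals all_analysis.
From mathcomp Require Import ring lra finmap.
Import Order.TTheory GRing.Theory Num.Theory.
Local Open Scope classical_set_scope.
Local Open Scope ring_scope.

Section Chains.
Context {R : realType} {X : metricType R} (f : X -> X).
Local Notation d := (@mdist R X).

Lemma dtri x y z : d x z <= d x y + d y z.
Proof. exact: metric_triangle. Qed.

Lemma chain1 (e : R) a b : d (f a) b <= e -> delta_chain f e a b.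
Proof.
move=> h; exists 1%N, (fun i => if i == 0%N then a else b); split => //.
by move=> i; rewrite ltnS leqn0 => /eqP ->.
Qed.

Lemma chain_trans (e : R) a b c :
  delta_chain f e a b -> delta_chain f e b c -> delta_chain f e a c.
Proof.
move=> [k [x [k1 x0 xk hx]]] [m [y [m1 y0 ym hy]]].
exists (k + m)%N, (fun i => if (i < k)%N then x i else y (i - k)%N); split.
- by rewrite (leq_trans k1) // leq_addr.
- by rewrite k1.
- by rewrite ltnNge leq_addr /= addKn.
move=> i ikm; case: (ltnP i k) => ik.
  case: (ltnP i.+1 k) => ik1; first exact: hx.
  have e1 : i.+1 = k by apply/eqP; rewrite eqn_leq ik ik1.
  by rewrite -e1 subnn y0 -xk -e1; apply: hx.
rewrite ltnNge (leq_trans ik) //= subSn //; apply: hy.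
by rewrite ltn_subLR.
Qed.

Lemma chain_mono (e e' : R) a b : e <= e' -> delta_chain f e a b -> delta_chain f e' a b.
Proof.
move=> ee [k [x [k1 x0 xk hx]]]; exists k, x; split => // i ik.
exact: le_trans (hx i ik) ee.
Qed.

Lemma chain_end (e eta : R) a b c :
  delta_chain f e a b -> d b c <= eta -> delta_chain f (e + eta) a c.
Proof.
move=> [k [x [k1 x0 xk hx]]] bc.
have eta0 : 0 <= eta by apply: le_trans bc; apply: mdist_ge0.
exists k, (fun i => if i == k then c else x i); split.
- exact: k1.
- by rewrite (ltn_eqF k1).
- by rewrite eqxx.
move=> i ik; rewrite (ltn_eqF ik); case: eqP => [ik1|_].
  apply: le_trans (dtri _ b _) _; apply: lerD => //.
  by rewrite -xk -ik1; apply: hx.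
by rewrite -[X in X <= _]addr0; apply: lerD => //; apply: hx.
Qed.

Lemma chain_orbit (e : R) a n : 0 <= e -> (0 < n)%N -> delta_chain f e a (iter n f a).
Proof.
move=> e0 n0; exists n, (fun i => iter i f a); split => // i _.
by rewrite /= mdistxx.
Qed.

Lemma chain_rel_trans a b c : chain_rel f a b -> chain_rel f b c -> chain_rel f a c.
Proof. by move=> h1 h2 e e0; apply: chain_trans (h1 e e0) (h2 e e0). Qed.

End Chains.

Section Shad.
Context {R : realType} {X : metricType R} (f : X -> X).
Local Notation d := (@mdist R X).
Variables (L e0 : R) (L0 : 0 < L) (L1 : L < 1) (e00 : 0 < e0).
Hypothesis sh : forall e, 0 < e -> e <= e0 -> forall x : nat -> X,
  pseudo_orbit f e x -> exists y, shadowed_by f (L * e) x y.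

Lemma improve a b (e eps : R) : chain_rel f a a -> 0 < e -> e <= e0 -> 0 < eps ->
  delta_chain f e a b -> delta_chain f (L * e + eps) a b.
Proof.
move=> aa e0' ee0 eps0 [k [x [k1 x0 xk hx]]].
pose p i := if (i <= k)%N then x i else iter (i - k) f b.
have pE i : (k <= i)%N -> p i = iter (i - k) f b.
  move=> ki; rewrite /p; case: leqP => // ik.
  have -> : i = k by apply/eqP; rewrite eqn_leq ik ki.
  by rewrite subnn /= xk.
have po : pseudo_orbit f e p.
  move=> i; case: (ltnP i k) => ik.
    by rewrite /p (ltnW ik) ik; apply: hx.
  rewrite !pE //; last exact: leqW.
  by rewrite subSn //= mdistxx ltW.
have [w hw] := @sh e e0' ee0 p po.
have hw0 : d a w <= L * e.
  by rewrite metric_sym; have := hw 0%N; rewrite /p leq0n x0.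
have hwk : d (iter k f w) b <= L * e.
  by have := hw k; rewrite /p leqnn xk.
apply: chain_trans (_ : delta_chain f (L * e + eps) a w) _.
  rewrite addrC; apply: chain_end hw0; exact: aa.
apply: chain_mono (_ : delta_chain f (0 + L * e) w b).
  by rewrite add0r lerDl ltW.
apply: chain_end hwk; exact: chain_orbit.
Qed.

End Shad.

Section Shad2.
Context {R : realType} {X : metricType R} (f : X -> X).
Local Notation d := (@mdist R X).
Variables (L e0 : R) (L0 : 0 < L) (L1 : L < 1) (e00 : 0 < e0).
Hypothesis sh : forall e, 0 < e -> e <= e0 -> forall x : nat -> X,
  pseudo_orbit f e x -> exists y, shadowed_by f (L * e) x y.

Lemma expr_small (q eta : R) : 0 <= q -> q < 1 -> 0 < eta -> exists n, q ^+ n < eta.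
Proof.
move=> q0 q1 eta0.
have := @cvg_expr R q; rewrite ger0_norm // => /(_ q1).
move=> /cvgr0_norm_lt /(_ _ eta0) [N _ HN].
exists N; have := HN N (leqnn N); rewrite /= ger0_norm //; exact: exprn_ge0.
Qed.

Lemma reach a b (e : R) : chain_rel f a a -> 0 < e -> e <= e0 ->
  delta_chain f e a b -> chain_rel f a b.
Proof.
move=> aa ep ee0 ch eta eta0.
pose q := (1 + L) / 2.
have q0 : 0 < q by rewrite divr_gt0 // addr_gt0.
have q1 : q < 1 by rewrite ltr_pdivrMr // mul1r ltrD2l.
have H n : delta_chain f (e * q ^+ n) a b.
  elim: n => [|n IH]; first by rewrite expr0 mulr1.
  have eqn : 0 < e * q ^+ n by rewrite mulr_gt0 // exprn_gt0.
  have eqn0 : e * q ^+ n <= e0.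
    apply: le_trans ee0; rewrite ler_piMr //; first exact: ltW.
    exact: exprn_ile1 (ltW q0) (ltW q1).
  have := @improve _ _ f L e0 sh _ _ _ _ aa eqn eqn0 (_ : 0 < e * q ^+ n * ((1 - L) / 2)) IH.
  have -> : L * (e * q ^+ n) + e * q ^+ n * ((1 - L) / 2) = e * q ^+ n.+1.
    by rewrite exprS /q; field.
  apply; by rewrite mulr_gt0 // divr_gt0 // subr_gt0.
have [n hn] : exists n, q ^+ n < eta / e.
  by apply: expr_small; rewrite ?divr_gt0 // ltW.
apply: chain_mono (H n).
by rewrite mulrC -ler_pdivlMr // ltW.
Qed.

Lemma near_reach a b : chain_rel f a a -> d a b <= e0 / 2 -> chain_rel f a b.
Proof.
move=> aa ab.
have e2 : 0 < e0 / 2 by rewrite divr_gt0.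
have ch : delta_chain f (e0 / 2 + e0 / 2) a b by apply: chain_end ab; exact: aa.
rewrite -splitr in ch.
apply: (@reach a b e0 aa e00 (lexx _) ch).
Qed.

End Shad2.

Section Top.
Context {R : realType} {X : metricType R} (f : X -> X).
Local Notation d := (@mdist R X).

Lemma cluster_orbit (cpt : compact [set: X]) (y : X) : exists q,
  forall eps, 0 < eps -> forall N, exists n, (N <= n)%N /\ d q (iter n f y) < eps.
Proof.
have := cpt ((fun n => iter n f y) @ \oo) _ filterT.
move=> [q [_ cl]]; exists q => eps eps0 N.
have FA : ((fun n => iter n f y) @ \oo) [set z | exists n, (N <= n)%N /\ z = iter n f y].
  by exists N => // n /= Nn; exists n.
have [z [[n [Nn ->]] bz]] := cl _ (ball q eps) FA (nbhsx_ballx q eps eps0).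
exists n; split => //.
by move: bz; rewrite ballEmdist.
Qed.

Lemma orbit_rec (cont : continuous f) (y q : X) :
  (forall eps, 0 < eps -> forall N, exists n, (N <= n)%N /\ d q (iter n f y) < eps) ->
  chain_rel f y q /\ chain_rel f q q.
Proof.
move=> hq; split.
  move=> eta eta0; have [n [n1 hn]] := hq eta eta0 1%N.
  have : delta_chain f (0 + eta) y q.
    apply: chain_end (_ : delta_chain f 0 y (iter n f y)) _.
      exact: chain_orbit.
    by rewrite metric_sym ltW.
  by rewrite add0r.
move=> eta eta0.
have Hn := @metricType_numDomainType.cvgr_dist_lt R X X (nbhs q) (nbhs_filter q) f (f q) (cont q) eta eta0.
have [rho rho0 sub] := iffLR (metricType_numDomainType.nbhs_mdistP _ _) Hn.
have [n [_ hn]] := hq rho rho0 0%N.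
have [m [nm hm]] := hq eta eta0 n.+2.
apply: (@chain_trans _ _ f eta q (iter n.+1 f y)).
  apply: chain1; apply: ltW; exact: (sub _ hn).
have : delta_chain f (0 + eta) (iter n.+1 f y) q.
  apply: chain_end (_ : delta_chain f 0 (iter n.+1 f y) (iter (m - n.+1) f (iter n.+1 f y))) _.
    apply: chain_orbit => //; rewrite subn_gt0; exact: nm.
  rewrite -iterD subnK; last exact: ltnW.
  by rewrite metric_sym ltW.
by rewrite add0r.
Qed.

End Top.

Definition withpt (T : Type) (t : T) : Type := T.
HB.instance Definition _ (T : topologicalType) (t : T) := Topological.copy (@withpt T t) T.
HB.instance Definition _ (T : topologicalType) (t : T) := isPointed.Build (@withpt T t) t.

Lemma cover_of (T : topologicalType) (t : T) : compact [set: T] -> cover_compact [set: T].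
Proof.
move=> c; have : compact [set: @withpt T t] by exact: c.
rewrite (@compact_cover (@withpt T t)); exact.
Qed.

Lemma cls_eq (R : realType) (X : metricType R) (f : X -> X) (x z : X) :
  chain_rel f x z -> chain_rel f z x ->
  [set y | chain_equiv f x y] = [set y | chain_equiv f z y].
Proof.
move=> xz zx; apply/seteqP; split => y /=.
  move=> [_ [Cy [xy yx]]]; split; first exact: chain_rel_trans zx xz.
  by split => //; split; [exact: chain_rel_trans zx xy | exact: chain_rel_trans yx xz].
move=> [_ [Cy [zy yz]]]; split; first exact: chain_rel_trans xz zx.
by split => //; split; [exact: chain_rel_trans xz zy | exact: chain_rel_trans yz zx].
Qed.

Theorem theorem1p8 (R : realType) (X : metricType R) (f : X -> X) (L : R) :
  compact [set: X] -> continuous f -> 0 < L -> L < 1 ->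
  lip_shadowing f L ->
  finite_set (chain_components f) /\
  (forall C, chain_components f C -> lip_shadowing_on C f L).
Proof.
move=> cpt cont L0 L1 [e0 e00 H].
have sh : forall e, 0 < e -> e <= e0 -> forall x : nat -> X,
    pseudo_orbit f e x -> exists y, shadowed_by f (L * e) x y.
  move=> e ep ee x px; have [y _ hy] := H e ep ee x (fun _ => I) px.
  by exists y.
have NR a b : chain_rel f a a -> mdist a b <= e0 / 2 -> chain_rel f a b.
  exact: (@near_reach R X f L e0 L0 L1 e00 sh).
have e4 : 0 < e0 / 4 by rewrite divr_gt0.
have e42 : e0 / 4 <= e0 / 2 by rewrite ler_pdivrMr // mulrAC ler_pdivlMr //; nra.
split.
  have [[x0 _]|nx] := pselect (exists x : X, True); last first.
    suff -> : chain_components f = set0 by exact: finite_set0.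
    by apply/seteqP; split => // C [x]; exfalso; apply: nx; exists x.
  have cpt' := @cover_of X x0 cpt.
  have cov0 : [set: X] `<=` \bigcup_(c in [set: X]) interior (ball c (e0 / 4)).
    move=> x _; exists x => //; exact: (open_nbhs_ball x (PosNum e4)).2.
  have [D _ cov] := cpt' X setT (fun c => interior (ball c (e0 / 4)))
    (fun c _ => @open_interior _ _) cov0.
  pose G c := [set y | exists x, chain_recurrent f x /\ ball c (e0 / 4) x /\ chain_equiv f x y].
  have fG : finite_set (G @` [set` D]) by apply: finite_image; exact: finite_fset.
  suff sG : chain_components f `<=` G @` [set` D] by exact: sub_finite_set sG fG.
  move=> C [x Cx ->].
  have [c Dc bc] := cov x I.
  exists c => //.
  have bcx : ball c (e0 / 4) x by exact: interior_subset.
  apply/seteqP; split => y /=.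
    move=> [x' [Cx' [bx' exy]]].
    have dxx : mdist x x' <= e0 / 2.
      move: bcx bx'; rewrite !ballEmdist /= => h1 h2.
      apply: le_trans (metric_triangle x c x') _.
      rewrite metric_sym (splitr (e0 / 2)).
      have -> : e0 / 2 / 2 = e0 / 4 by field.
      by apply: lerD; apply: ltW.
    have dxx' : mdist x' x <= e0 / 2 by rewrite metric_sym.
    have E := @cls_eq R X f x x' (NR _ _ Cx dxx) (NR _ _ Cx' dxx').
    have : [set z | chain_equiv f x' z] y by [].
    by rewrite -E.
  by move=> exy; exists x.
move=> C [p Cp ->].
exists (e0 / 4); first by [].
move=> e ep ee x xC px.
have e2e : e0 / 2 <= e0 by rewrite ler_pdivrMr //; nra.
have [y hy] := sh e ep (le_trans ee (le_trans e42 e2e)) x px.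
have Le : L * e <= e0 / 4.
  apply: le_trans ee; rewrite ler_piMl ?ltW //.
exists y => //.
have [_ [Cx0 [px0 x0p]]] := xC 0%N.
have x0y : chain_rel f (x 0%N) y.
  apply: NR => //; rewrite metric_sym.
  by apply: le_trans (hy 0%N) (le_trans Le e42).
have [q hq] := cluster_orbit f cpt y.
have [yq qq] := @orbit_rec R X f cont y q hq.
have [n [_ hn]] := hq _ e4 0%N.
have [_ [_ [_ xnp]]] := xC n.
have qxn : chain_rel f q (x n).
  apply: NR => //; apply: le_trans (metric_triangle q (iter n f y) (x n)) _.
  rewrite (splitr (e0 / 2)).
  have -> : e0 / 2 / 2 = e0 / 4 by field.
  by apply: lerD; [exact: ltW | exact: le_trans (hy n) Le].
have yp : chain_rel f y p by apply: chain_rel_trans yq _; apply: chain_rel_trans qxn xnp.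
have py : chain_rel f p y by apply: chain_rel_trans px0 x0y.
split => //; split; last by [].
exact: chain_rel_trans yp py.
Qed.
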